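(* Let $d,n\in\mathbb{N}$ and let $g,\tilde g\in\mathbb{R}[\mathbf{x}]$ be polynomials of degree $d$ such that $\mathbf{G}=\{\mathbf{x}\in\mathbb{R}^n:g(\mathbf{x})<1\}$ and $\tilde{\mathbf{G}}=\{\mathbf{x}:\tilde g(\mathbf{x})<1\}$ are bounded, and $g(0)\neq1$, $\tilde g(0)\ne1$. (i) If $\int_{\mathbf{G}}\mathbf{x}^\alpha d\mathbf{x}=\int_{\tilde{\mathbf{G}}}\mathbf{x}^\alpha d\mathbf{x}$ for all $\alpha\in\mathbb{N}^n$ with $|\alpha|\le 3d$, then this equality holds for all $\alpha\in\mathbb{N}^n$; that is, the full moment sequence of Lebesgue measure restricted to $\mathbf{G}$ is determined by its moments of order at most $3d$. (ii) Let moreover $p\in\mathbb{R}[\mathbf{x}]$ have degree at most $t$. If $\int_{\mathbf{G}}\mathbf{x}^\alpha e^{p(\mathbf{x})}d\mathbf{x}=\int_{\tilde{\mathbf{G}}}\mathbf{x}^\alpha e^{p(\mathbf{x})}d\mathbf{x}$ for all $|\alpha|\le 3d+t$, then this equality holds for all $\alpha\in\mathbb{N}^n$.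
   Context: $\mathbf{x}^\alpha=x_1^{\alpha_1}\cdots x_n^{\alpha_n}$, $|\alpha|=\sum_i\alpha_i$; integrals with respect to Lebesgue measure. *)

(* Defs.v *)
From HB Require Import structures.
From mathcomp Require Import all_boot all_order all_algebra.
From mathcomp Require Import all_classical all_reals all_analysis.
From mathcomp Require mpoly.
Import (canonicals) mpoly.
Set Implicit Arguments.
Unset Strict Implicit.
Unset Printing Implicit Defensive.
Import Order.TTheory GRing.Theory Num.Theory.
Local Open Scope classical_set_scope.
Local Open Scope ring_scope.

(* Points of R^n are n-tuples of reals; n.-tuple R carries the product
   (Borel) sigma-algebra generated by the coordinate projections. *)

Definition peval (R : realType) (n : nat) (p : mpoly.mpoly n R) (x : n.-tuple R) : R :=
  mpoly.meval (fun i => tnth x i) p.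

(* total degree of a polynomial = max of |m| over the monomials m in the support
   of p (0 for the zero polynomial; only used for nonzero polynomials
   or as an upper bound) *)
Definition tdeg (R : realType) (n : nat) (p : mpoly.mpoly n R) : nat :=
  (\max_(m <- mpoly.msupp p) mpoly.mdeg m)%N.

Definition has_degree (R : realType) (n : nat) (p : mpoly.mpoly n R) (d : nat) : Prop :=
  p != 0 /\ tdeg p = d.

Definition monom (R : realType) (n : nat) (alpha : 'I_n -> nat) (x : n.-tuple R) : R :=
  \prod_(i < n) (tnth x i) ^+ (alpha i).

Definition absm (n : nat) (alpha : 'I_n -> nat) : nat := (\sum_(i < n) alpha i)%N.

Definition sublevel1 (R : realType) (n : nat) (g : mpoly.mpoly n R) : set (n.-tuple R) :=
  [set x | peval g x < 1].

Definition bounded_tuple_set (R : realType) (n : nat) (A : set (n.-tuple R)) : Prop :=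
  exists M : R, forall x, A x -> forall i : 'I_n, `|tnth x i| <= M.

(* mu is the Lebesgue measure on (the Borel sets of) R^n: it gives every
   closed box  prod_i [a_i, b_i]  (a_i <= b_i) its volume prod_i (b_i - a_i).
   By the pi-lambda uniqueness theorem this determines mu on Borel sets. *)
Definition is_lebesgue_measure_n (R : realType) (n : nat)
    (mu : {measure set (n.-tuple R) -> \bar R}) : Prop :=
  forall a b : n.-tuple R, (forall i, tnth a i <= tnth b i) ->
    mu [set x | forall i, tnth a i <= tnth x i <= tnth b i]
    = (\prod_(i < n) (tnth b i - tnth a i))%:E.

(* Main.v *)
Require Import Defs.
From HB Require Import structures.
From mathcomp Require Import all_boot all_order all_algebra.
From mathcomp Require Import all_classical all_reals all_analysis.
From mathcomp Require mpoly.
Import (canonicals) mpoly.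
Import Order.TTheory GRing.Theory Num.Theory.
Local Open Scope classical_set_scope.
Local Open Scope ring_scope.
Set Implicit Arguments. Unset Strict Implicit.
Definition lb (R : realType) n (f : n.-tuple R -> R) :=
  forall M : R, exists B : R, forall x : n.-tuple R,
    (forall i, `|tnth x i| <= M) -> `|f x| <= B.

Definition mf (R : realType) n (f : n.-tuple R -> R) := measurable_fun setT f.
Arguments lb {R n} f.
Arguments mf {R n} f.

Lemma lb_cst (R : realType) n (c : R) : lb (fun _ : n.-tuple R => c).
Proof. by move=> M; exists `|c|. Qed.

Lemma lb_add (R : realType) n (f h : n.-tuple R -> R) :
  lb f -> lb h -> lb (fun x => f x + h x).
Proof.
move=> hf hh M; have [B1 H1] := hf M; have [B2 H2] := hh M.
exists (B1 + B2) => x Hx; apply: le_trans (ler_normD _ _) _.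
exact: lerD (H1 _ Hx) (H2 _ Hx).
Qed.

Lemma lb_mul (R : realType) n (f h : n.-tuple R -> R) :
  lb f -> lb h -> lb (fun x => f x * h x).
Proof.
move=> hf hh M; have [B1 H1] := hf M; have [B2 H2] := hh M.
exists (B1 * B2) => x Hx; rewrite normrM.
by apply: ler_pM => //; [exact: H1|exact: H2].
Qed.

Lemma lb_tnth (R : realType) n (i : 'I_n) : lb (fun x : n.-tuple R => tnth x i).
Proof. by move=> M; exists M => x; apply. Qed.

Lemma lb_sum (R : realType) n (I : Type) (s : seq I) (F : I -> n.-tuple R -> R) :
  (forall i, lb (F i)) -> lb (fun x => \sum_(i <- s) F i x).
Proof.
move=> hF; elim: s => [|a s IH].
  have -> : (fun x => \sum_(i <- [::]) F i x) = fun=> 0.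
    by apply: funext => x; rewrite big_nil.
  exact: lb_cst.
have -> : (fun x => \sum_(i <- a :: s) F i x) = fun x => F a x + \sum_(i <- s) F i x.
  by apply: funext => x; rewrite big_cons.
exact: lb_add.
Qed.

Lemma lb_prod (R : realType) n (I : Type) (s : seq I) (F : I -> n.-tuple R -> R) :
  (forall i, lb (F i)) -> lb (fun x => \prod_(i <- s) F i x).
Proof.
move=> hF; elim: s => [|a s IH].
  have -> : (fun x => \prod_(i <- [::]) F i x) = fun=> 1.
    by apply: funext => x; rewrite big_nil.
  exact: lb_cst.
have -> : (fun x => \prod_(i <- a :: s) F i x) = fun x => F a x * \prod_(i <- s) F i x.
  by apply: funext => x; rewrite big_cons.
exact: lb_mul.
Qed.

Lemma lb_expn (R : realType) n (f : n.-tuple R -> R) k : lb f -> lb (fun x => f x ^+ k).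
Proof.
move=> hf; elim: k => [|k IH].
  have -> : (fun x => f x ^+ 0) = fun=> 1 by apply: funext => x; rewrite expr0.
  exact: lb_cst.
have -> : (fun x => f x ^+ k.+1) = fun x => f x * f x ^+ k.
  by apply: funext => x; rewrite exprS.
exact: lb_mul.
Qed.

Lemma lb_exp (R : realType) n (f : n.-tuple R -> R) : lb f -> lb (fun x => expR (f x)).
Proof.
move=> hf M; have [B HB] := hf M; exists (expR B) => x Hx.
rewrite ger0_norm ?expR_ge0 // ler_expR.
by apply: le_trans (HB x Hx); exact: ler_norm.
Qed.

Lemma mf_cst (R : realType) n (c : R) : mf (fun _ : n.-tuple R => c).
Proof. exact: measurable_cst. Qed.

Lemma mf_add (R : realType) n (f h : n.-tuple R -> R) :
  mf f -> mf h -> mf (fun x => f x + h x).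
Proof. exact: measurable_realfun.measurable_funD. Qed.

Lemma mf_mul (R : realType) n (f h : n.-tuple R -> R) :
  mf f -> mf h -> mf (fun x => f x * h x).
Proof. exact: measurable_realfun.measurable_funM. Qed.

Lemma mf_tnth (R : realType) n (i : 'I_n) : mf (fun x : n.-tuple R => tnth x i).
Proof. exact: measurable_tnth. Qed.

Lemma mf_exp (R : realType) n (f : n.-tuple R -> R) : mf f -> mf (fun x => expR (f x)).
Proof. move=> hf; exact: (measurableT_comp (@measurable_realfun.measurable_expR R) hf). Qed.
Lemma mf_sum (R : realType) n (I : Type) (s : seq I) (F : I -> n.-tuple R -> R) :
  (forall i, mf (F i)) -> mf (fun x => \sum_(i <- s) F i x).
Proof.
move=> hF; elim: s => [|a s IH].
  have -> : (fun x => \sum_(i <- [::]) F i x) = fun=> 0.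
    by apply: funext => x; rewrite big_nil.
  exact: mf_cst.
have -> : (fun x => \sum_(i <- a :: s) F i x) = fun x => F a x + \sum_(i <- s) F i x.
  by apply: funext => x; rewrite big_cons.
exact: mf_add.
Qed.

Lemma mf_prod (R : realType) n (I : Type) (s : seq I) (F : I -> n.-tuple R -> R) :
  (forall i, mf (F i)) -> mf (fun x => \prod_(i <- s) F i x).
Proof.
move=> hF; elim: s => [|a s IH].
  have -> : (fun x => \prod_(i <- [::]) F i x) = fun=> 1.
    by apply: funext => x; rewrite big_nil.
  exact: mf_cst.
have -> : (fun x => \prod_(i <- a :: s) F i x) = fun x => F a x * \prod_(i <- s) F i x.
  by apply: funext => x; rewrite big_cons.
exact: mf_mul.
Qed.

Lemma mf_expn (R : realType) n (f : n.-tuple R -> R) k : mf f -> mf (fun x => f x ^+ k).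
Proof.
move=> hf; elim: k => [|k IH].
  have -> : (fun x => f x ^+ 0) = fun=> 1 by apply: funext => x; rewrite expr0.
  exact: mf_cst.
have -> : (fun x => f x ^+ k.+1) = fun x => f x * f x ^+ k.
  by apply: funext => x; rewrite exprS.
exact: mf_mul.
Qed.

Lemma mf_monom (R : realType) n (a : 'I_n -> nat) : mf (monom (R:=R) a).
Proof. apply: mf_prod => i; apply: mf_expn; exact: mf_tnth. Qed.

Lemma lb_monom (R : realType) n (a : 'I_n -> nat) : lb (monom (R:=R) a).
Proof. apply: lb_prod => i; apply: lb_expn; exact: lb_tnth. Qed.

Lemma peval_sum (R : realType) n (p : mpoly.mpoly n R) (x : n.-tuple R) :
  peval p x = \sum_(m <- mpoly.msupp p) mpoly.mcoeff m p * monom (mpoly.fun_of_multinom m) x.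
Proof. by rewrite /peval mpoly.mevalE. Qed.

Lemma mf_peval (R : realType) n (p : mpoly.mpoly n R) : mf (peval p).
Proof.
have -> : peval p = fun x => \sum_(m <- mpoly.msupp p) mpoly.mcoeff m p * monom (mpoly.fun_of_multinom m) x.
  by apply: funext => x; exact: peval_sum.
apply: mf_sum => m; apply: mf_mul; [exact: mf_cst | exact: mf_monom].
Qed.

Lemma lb_peval (R : realType) n (p : mpoly.mpoly n R) : lb (peval p).
Proof.
have -> : peval p = fun x => \sum_(m <- mpoly.msupp p) mpoly.mcoeff m p * monom (mpoly.fun_of_multinom m) x.
  by apply: funext => x; exact: peval_sum.
apply: lb_sum => m; apply: lb_mul; [exact: lb_cst | exact: lb_monom].
Qed.

Lemma measurable_sub1 (R : realType) n (f : n.-tuple R -> R) :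
  mf f -> measurable [set x | f x < 1].
Proof.
move=> hf; have := hf measurableT _ (measurable_itv `]-oo, 1[).
rewrite setTI; congr measurable; apply/seteqP; split => x /=; by rewrite in_itv.
Qed.

Lemma fin_bdd (R : realType) n (mu : {measure set (n.-tuple R) -> \bar R}) A :
  is_lebesgue_measure_n mu -> measurable A -> bounded_tuple_set A -> (mu A < +oo)%E.
Proof.
move=> hmu mA [M hM].
pose a := [tuple of nseq n (- `|M|)]; pose b := [tuple of nseq n `|M|].
pose B := [set x : n.-tuple R | forall i, tnth a i <= tnth x i <= tnth b i].
have hab : forall i, tnth a i <= tnth b i.
  move=> i; rewrite !tnth_nseq.
  by have := lexx `|M|; rewrite -{1}normr_id ler_norml => /andP[].
have mB : measurable B.
  have -> : B = \bigcap_(i in [set: 'I_n]) ((fun x : n.-tuple R => tnth x i) @^-1` [set` `[- `|M|, `|M|]]).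
    apply/seteqP; split => x /=.
      by move=> Hx i _; have := Hx i; rewrite !tnth_nseq /= in_itv.
    by move=> Hx i; have := Hx i I; rewrite !tnth_nseq /= in_itv.
  apply: fin_bigcap_measurable; first exact: finite_finset.
  move=> i _; have := measurable_tnth i measurableT (measurable_itv `[- `|M|, `|M|]).
  by rewrite setTI.
have AB : A `<=` B.
  move=> x Ax i; rewrite !tnth_nseq -ler_norml.
  by apply: le_trans (hM x Ax i) _; exact: ler_norm.
apply: (le_lt_trans (le_measure mu _ _ AB)); try by rewrite inE.
have H2 := ltry (\prod_(i < n) (tnth b i - tnth a i)).
rewrite -(hmu a b hab) in H2.
exact: H2.
Qed.
Lemma integ (R : realType) n (mu : {measure set (n.-tuple R) -> \bar R}) A (f : n.-tuple R -> R) :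
  is_lebesgue_measure_n mu -> measurable A -> bounded_tuple_set A -> mf f -> lb f ->
  mu.-integrable A (fun x => (f x)%:E).
Proof.
move=> hmu mA bA hf lbf.
change (mu.-integrable A (EFin \o f)).
apply: (measurable_bounded_integrable mA (fin_bdd hmu mA bA)).
  exact: measurable_funS measurableT (@subsetT _ _) hf.
have [M hM] := bA; have [B hB] := lbf M.
exists B; split; first exact: num_real.
by move=> K BK x Ax /=; apply: le_trans (ltW BK); exact: hB (hM x Ax).
Qed.

Lemma int_lin (R : realType) n (mu : {measure set (n.-tuple R) -> \bar R}) A
   (w : n.-tuple R -> R) (I : Type) (s : seq I) (c : I -> R) (F : I -> n.-tuple R -> R) :
  is_lebesgue_measure_n mu -> measurable A -> bounded_tuple_set A -> mf w -> lb w ->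
  (forall i, mf (F i)) -> (forall i, lb (F i)) ->
  (\int[mu]_(x in A) ((\sum_(i <- s) c i * F i x) * w x)%:E =
  \sum_(i <- s) ((c i)%:E * \int[mu]_(x in A) (F i x * w x)%:E))%E.
Proof.
move=> hmu mA bA mw lbw mF lbF; elim: s => [|a s IH].
  rewrite big_nil; under eq_integral => x _ do rewrite big_nil mul0r.
  exact: integral0.
rewrite big_cons; under eq_integral => x _ do rewrite big_cons mulrDl EFinD.
rewrite integralD //; first last.
- apply: integ => //.
    apply: mf_mul => //; apply: mf_sum => i; apply: mf_mul => //; exact: mf_cst.
  apply: lb_mul => //; apply: lb_sum => i; apply: lb_mul => //; exact: lb_cst.
- apply: integ => //.
    apply: mf_mul => //; apply: mf_mul => //; exact: mf_cst.
  apply: lb_mul => //; apply: lb_mul => //; exact: lb_cst.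
rewrite IH; congr (_ + _)%E.
under eq_integral => x _ do rewrite -mulrA EFinM.
rewrite integralZl //; apply: integ => //; [exact: mf_mul | exact: lb_mul].
Qed.

Lemma split_int (R : realType) n (mu : {measure set (n.-tuple R) -> \bar R}) A B
   (f : n.-tuple R -> R) :
  measurable A -> measurable B -> mf f ->
  (\int[mu]_(x in A) (f x)%:E =
  \int[mu]_(x in A `&` B) (f x)%:E + \int[mu]_(x in A `\` B) (f x)%:E)%E.
Proof.
move=> mA mB hf; rewrite -{1}(setUIDK A B) integral_setU //.
- exact: measurableI.
- exact: measurableD.
- rewrite setUIDK; apply/measurable_realfun.measurable_EFinP.
  exact: measurable_funS measurableT (@subsetT _ _) hf.
- by apply/disj_setPS => x [[_ Bx] [_ nBx]].
Qed.

Lemma null_int (R : realType) n (mu : {measure set (n.-tuple R) -> \bar R}) N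
   (f : n.-tuple R -> R) :
  is_lebesgue_measure_n mu -> measurable N -> bounded_tuple_set N -> mu N = 0%E ->
  mf f -> lb f -> (\int[mu]_(x in N) (f x)%:E = 0)%E.
Proof.
move=> hmu mN bN N0 hf lbf.
by rewrite (negligible_integral mN mN (integ hmu mN bN hf lbf) N0) setDv integral_set0.
Qed.
Lemma bdd_sub (R : realType) n (A B : set (n.-tuple R)) :
  A `<=` B -> bounded_tuple_set B -> bounded_tuple_set A.
Proof. by move=> AB [M hM]; exists M => x /AB; exact: hM. Qed.

Lemma mom_poly (R : realType) n (mu : {measure set (n.-tuple R) -> \bar R}) G H
   (w : n.-tuple R -> R) (p : mpoly.mpoly n R) d :
  is_lebesgue_measure_n mu -> measurable G -> measurable H ->
  bounded_tuple_set G -> bounded_tuple_set H -> mf w -> lb w -> (tdeg p <= d)%N ->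
  (forall alpha : 'I_n -> nat, (absm alpha <= d)%N ->
     (\int[mu]_(x in G) (monom alpha x * w x)%:E
      = \int[mu]_(x in H) (monom alpha x * w x)%:E)%E) ->
  (\int[mu]_(x in G) (peval p x * w x)%:E = \int[mu]_(x in H) (peval p x * w x)%:E)%E.
Proof.
move=> hmu mG mH bG bH mw lbw hp hyp.
have E : forall A, (\int[mu]_(x in A) (peval p x * w x)%:E =
   \int[mu]_(x in A) ((\sum_(m <- mpoly.msupp p) mpoly.mcoeff m p *
        monom (mpoly.fun_of_multinom m) x) * w x)%:E)%E.
  by move=> A; apply: eq_integral => x _; rewrite peval_sum.
rewrite !E !int_lin //; try (move=> m; first [exact: mf_monom | exact: lb_monom]).
apply: eq_big_seq => m hm; congr (_ * _)%E; apply: hyp.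
rewrite /absm -mpoly.mdegE; apply: leq_trans hp.
exact: leq_bigmax_seq.
Qed.
Lemma null_diff (R : realType) n (mu : {measure set (n.-tuple R) -> \bar R})
   (g gt : mpoly.mpoly n R) (w : n.-tuple R -> R) d :
  is_lebesgue_measure_n mu -> (tdeg g <= d)%N -> (tdeg gt <= d)%N ->
  bounded_tuple_set (sublevel1 g) -> bounded_tuple_set (sublevel1 gt) ->
  mf w -> lb w -> (forall x, 0 < w x) ->
  (forall alpha : 'I_n -> nat, (absm alpha <= d)%N ->
     (\int[mu]_(x in sublevel1 g) (monom alpha x * w x)%:E
      = \int[mu]_(x in sublevel1 gt) (monom alpha x * w x)%:E)%E) ->
  mu (sublevel1 g `\` sublevel1 gt) = 0%E.
Proof.
move=> hmu hg hgt bG bH mw lbw wpos hyp.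
set G := sublevel1 g; set H := sublevel1 gt.
have mG : measurable G by exact: measurable_sub1 (mf_peval g).
have mH : measurable H by exact: measurable_sub1 (mf_peval gt).
pose q := peval (gt - g).
have qE : forall x, q x = peval gt x - peval g x.
  by move=> x; rewrite /q /peval mpoly.mevalB.
have mqw : mf (fun x => q x * w x) by apply: mf_mul => //; exact: mf_peval.
have lqw : lb (fun x => q x * w x) by apply: lb_mul => //; exact: lb_peval.
have Iq : forall A, measurable A -> bounded_tuple_set A ->
    (\int[mu]_(x in A) (q x * w x)%:E =
     \int[mu]_(x in A) (peval gt x * w x)%:E - \int[mu]_(x in A) (peval g x * w x)%:E)%E.
  move=> A mA bA.
  rewrite -(integralB_EFin mA (f1 := fun x => peval gt x * w x) (f2 := fun x => peval g x * w x)).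
  - by apply: eq_integral => x _; rewrite qE mulrBl EFinB.
  - by apply: integ => //; [apply: mf_mul => //; exact: mf_peval | apply: lb_mul => //; exact: lb_peval].
  - by apply: integ => //; [apply: mf_mul => //; exact: mf_peval | apply: lb_mul => //; exact: lb_peval].
have EG : (\int[mu]_(x in G) (q x * w x)%:E = \int[mu]_(x in H) (q x * w x)%:E)%E.
  rewrite !Iq //.
  by rewrite (mom_poly hmu mG mH bG bH mw lbw hg hyp) (mom_poly hmu mG mH bG bH mw lbw hgt hyp).
rewrite (split_int mu mG mH mqw) (split_int mu mH mG mqw) (setIC H G) in EG.
have mC : measurable (G `&` H) by exact: measurableI.
have mD : measurable (G `\` H) by exact: measurableD.
have mE : measurable (H `\` G) by exact: measurableD.
have bD : bounded_tuple_set (G `\` H) by apply: bdd_sub bG => x [].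
have bE : bounded_tuple_set (H `\` G) by apply: bdd_sub bH => x [].
have bC : bounded_tuple_set (G `&` H) by apply: bdd_sub bG => x [].
have fC : (\int[mu]_(x in G `&` H) (q x * w x)%:E)%E \is a fin_num.
  have := integrable_fin_num mC (integ hmu mC bC mqw lqw).
  exact.
have DE : (\int[mu]_(x in G `\` H) (q x * w x)%:E = \int[mu]_(x in H `\` G) (q x * w x)%:E)%E.
  move: EG; rewrite (addeC (\int[mu]_(x in G `&` H) _)%E) (addeC (\int[mu]_(x in G `&` H) _)%E).
  by move=> /(congr1 (fun z => z - \int[mu]_(x in G `&` H) (q x * w x)%:E)%E); rewrite !addeK.
have D0 : (0 <= \int[mu]_(x in G `\` H) (q x * w x)%:E)%E.
  apply: integral_ge0 => x [Gx nHx]; rewrite lee_fin; apply: mulr_ge0; last exact: ltW.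
  rewrite qE subr_ge0; apply: le_trans (ltW Gx) _.
  by rewrite leNgt; apply/negP.
have E0 : (\int[mu]_(x in H `\` G) (q x * w x)%:E <= 0)%E.
  have := @integral_ge0 _ _ _ mu (H `\` G) (fun x => (-1)%:E * (q x * w x)%:E)%E.
  rewrite integralZl //; last exact: integ.
  rewrite mulN1e oppe_ge0; apply => x [Hx nGx].
  rewrite -EFinM lee_fin mulN1r oppr_ge0; apply: mulr_le0_ge0; last exact: ltW.
  rewrite qE subr_le0; apply: le_trans (ltW Hx) _.
  by rewrite leNgt; apply/negP.
have I0 : (\int[mu]_(x in G `\` H) (q x * w x)%:E = 0)%E.
  by apply/eqP; rewrite eq_le D0 andbT DE.
have Iabs : (\int[mu]_(x in G `\` H) `|(q x * w x)%:E| = 0)%E.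
  rewrite -I0; apply: eq_integral => x /[1!inE] [[Gx nHx]].
  rewrite gee0_abs // lee_fin; apply: mulr_ge0; last exact: ltW.
  rewrite qE subr_ge0; apply: le_trans (ltW Gx) _.
  by rewrite leNgt; apply/negP.
have mEq := proj2 (measurable_realfun.measurable_EFinP (G `\` H) (fun x => q x * w x))
  (measurable_funS measurableT (@subsetT _ _) mqw).
have := (ae_eq_integral_abs mu mD mEq).1 Iabs.
case=> N [mN N0 sub].
apply/eqP; rewrite eq_le measure_ge0 andbT -N0.
apply: le_measure; rewrite ?inE //.
move=> x Dx; apply: sub => /= /(_ Dx) [] /eqP; rewrite mulf_eq0 => /orP[/eqP q0|/eqP w0].
  move: Dx => [Gx nHx]; move: q0; rewrite qE => /eqP; rewrite subr_eq0 => /eqP E.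
  by apply: nHx; rewrite /H /sublevel1 /= E.
by have := wpos x; rewrite w0 ltxx.
Qed.
Lemma all_mom (R : realType) n (mu : {measure set (n.-tuple R) -> \bar R})
   (g gt : mpoly.mpoly n R) (w : n.-tuple R -> R) d :
  is_lebesgue_measure_n mu -> (tdeg g <= d)%N -> (tdeg gt <= d)%N ->
  bounded_tuple_set (sublevel1 g) -> bounded_tuple_set (sublevel1 gt) ->
  mf w -> lb w -> (forall x, 0 < w x) ->
  (forall alpha : 'I_n -> nat, (absm alpha <= d)%N ->
     (\int[mu]_(x in sublevel1 g) (monom alpha x * w x)%:E
      = \int[mu]_(x in sublevel1 gt) (monom alpha x * w x)%:E)%E) ->
  forall alpha : 'I_n -> nat,
     (\int[mu]_(x in sublevel1 g) (monom alpha x * w x)%:E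
      = \int[mu]_(x in sublevel1 gt) (monom alpha x * w x)%:E)%E.
Proof.
move=> hmu hg hgt bG bH mw lbw wpos hyp alpha.
have D0 := null_diff hmu hg hgt bG bH mw lbw wpos hyp.
have E0 : mu (sublevel1 gt `\` sublevel1 g) = 0%E.
  apply: (null_diff hmu hgt hg bH bG mw lbw wpos) => beta hb; exact/esym/hyp.
have mG : measurable (sublevel1 g) by exact: measurable_sub1 (mf_peval g).
have mH : measurable (sublevel1 gt) by exact: measurable_sub1 (mf_peval gt).
have mf1 : mf (fun x => monom alpha x * w x) by apply: mf_mul => //; exact: mf_monom.
have lb1 : lb (fun x => monom alpha x * w x) by apply: lb_mul => //; exact: lb_monom.
rewrite (split_int mu mG mH mf1) (split_int mu mH mG mf1) (setIC (sublevel1 gt)).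
rewrite (null_int hmu (measurableD mG mH) _ D0 mf1 lb1); last by apply: bdd_sub bG => x [].
by rewrite (null_int hmu (measurableD mH mG) _ E0 mf1 lb1) //; apply: bdd_sub bH => x [].
Qed.

Unset Implicit Arguments.

Theorem theorem2 (R : realType) (d n : nat)
    (mu : {measure set (n.-tuple R) -> \bar R})
    (g gt : mpoly.mpoly n R) :
  is_lebesgue_measure_n mu ->
  has_degree g d -> has_degree gt d ->
  bounded_tuple_set (sublevel1 g) -> bounded_tuple_set (sublevel1 gt) ->
  peval g [tuple of nseq n 0] != 1 -> peval gt [tuple of nseq n 0] != 1 ->
  (* (i) *)
  ((forall alpha : 'I_n -> nat, (absm alpha <= 3 * d)%N ->
      (\int[mu]_(x in sublevel1 g) (monom alpha x)%:E
       = \int[mu]_(x in sublevel1 gt) (monom alpha x)%:E)%E) ->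
   forall alpha : 'I_n -> nat,
      (\int[mu]_(x in sublevel1 g) (monom alpha x)%:E
       = \int[mu]_(x in sublevel1 gt) (monom alpha x)%:E)%E)
  /\
  (* (ii) *)
  (forall (t : nat) (p : mpoly.mpoly n R), (tdeg p <= t)%N ->
   (forall alpha : 'I_n -> nat, (absm alpha <= 3 * d + t)%N ->
      (\int[mu]_(x in sublevel1 g) (monom alpha x * expR (peval p x))%:E
       = \int[mu]_(x in sublevel1 gt) (monom alpha x * expR (peval p x))%:E)%E) ->
   forall alpha : 'I_n -> nat,
      (\int[mu]_(x in sublevel1 g) (monom alpha x * expR (peval p x))%:E
       = \int[mu]_(x in sublevel1 gt) (monom alpha x * expR (peval p x))%:E)%E).
Proof.
move=> hmu [_ hg] [_ hgt] bG bH _ _.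
have hg' : (tdeg g <= d)%N by rewrite hg.
have hgt' : (tdeg gt <= d)%N by rewrite hgt.
have d3 : (d <= 3 * d)%N by rewrite leq_pmull.
split.
  move=> hyp alpha.
  have e : forall A, (\int[mu]_(x in A) (monom alpha x)%:E =
      \int[mu]_(x in A) (monom alpha x * (fun=> 1) x)%:E)%E.
    by move=> A; apply: eq_integral => x _; rewrite mulr1.
  have m1 : mf (fun _ : n.-tuple R => 1 : R) by exact: mf_cst.
  have l1 : lb (fun _ : n.-tuple R => 1 : R) by exact: lb_cst.
  have K := all_mom (w := fun=> 1) hmu hg' hgt' bG bH m1 l1 (fun=> ltr01).
  rewrite !e; apply: K.
  move=> beta hb.
  have e' : forall A, (\int[mu]_(x in A) (monom beta x)%:E =
      \int[mu]_(x in A) (monom beta x * (fun=> 1) x)%:E)%E.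
    by move=> A; apply: eq_integral => x _; rewrite mulr1.
  rewrite -!e'; apply: hyp; exact: leq_trans hb d3.
move=> t p hp hyp alpha.
apply: (all_mom hmu hg' hgt' bG bH (mf_exp (mf_peval p)) (lb_exp (lb_peval p)) (fun x => expR_gt0 _)).
move=> beta hb; apply: hyp; apply: leq_trans hb _; apply: leq_trans d3 _; exact: leq_addr.
Qed.
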